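(* Let $P=\mathrm{Syl}_2A_{2^k}$ be a Sylow $2$-subgroup of the alternating group $A_{2^k}$. Then $P'=P^2$ and $\Phi(P)=P'$.
   Context: $P'$ is the derived (commutator) subgroup of $P$, $P^2$ is the subgroup generated by all squares $g^2$, $g\in P$, and $\Phi(P)$ is the Frattini subgroup of $P$. *)

(* Defs.v *)
From mathcomp Require Import all_boot all_fingroup all_solvable.
Set Implicit Arguments. Unset Strict Implicit. Unset Printing Implicit Defensive.
Local Open Scope group_scope.

Definition squares_subgroup (gT : finGroupType) (P : {set gT}) : {set gT} :=
  <<[set x ^+ 2 | x in P]>>.

(* Main.v *)
Require Import Defs.
From mathcomp Require Import all_boot all_fingroup all_solvable.
From mathcomp Require Import zify.
Set Implicit Arguments. Unset Strict Implicit. Unset Printing Implicit Defensive.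


Definition bit i x := odd (x %/ 2^i).

Lemma odd_div2S q : odd q = false -> (q + 1) %/ 2 = q %/ 2.
Proof. move=> h. lia. Qed.

Lemma bitD_le y l i : i <= l -> bit i (y + 2^l) = (i == l) (+) bit i y.
Proof.
move=> il; rewrite /bit.
have -> : 2^l = 2^(l-i) * 2^i by rewrite -expnD subnK.
rewrite divnDr ?dvdn_mull // mulnK ?expn_gt0 // oddD oddX /=.
rewrite subn_eq0 orbF addbC. case: (ltngtP i l) il => //; try lia.
Qed.

Lemma divD_gt y l i : bit l y = false -> l < i -> (y + 2^l) %/ 2^i = y %/ 2^i.
Proof.
move=> hb li.
have -> : 2^i = 2^l * 2 * 2^(i-l).-1.
  by rewrite -mulnA -expnS prednK ?subn_gt0 // -expnD subnKC // ltnW.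
rewrite !divnMA. rewrite [(y + 2^l) %/ 2^l]divnDr // divnn expn_gt0 /=.
by rewrite odd_div2S.
Qed.

Lemma bitD y l i : bit l y = false -> bit i (y + 2^l) = (i == l) (+) bit i y.
Proof.
move=> hb; case: (leqP i l) => il; first exact: bitD_le.
by rewrite /bit divD_gt // gtn_eqF.
Qed.

Definition flipn l x := if bit l x then x - 2^l else x + 2^l.

Lemma bit_ge l x : bit l x -> 2^l <= x.
Proof.
rewrite /bit => h; rewrite -divn_gt0 ?expn_gt0 //; by case: (x %/ 2^l) h.
Qed.

Lemma bit_flip l x i : bit i (flipn l x) = (i == l) (+) bit i x.
Proof.
rewrite /flipn; case: ifP => hb; last exact: bitD.
have e : x = (x - 2^l) + 2^l by rewrite subnK // bit_ge.
have hb' : bit l (x - 2^l) = false.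
  by move: hb; rewrite {1}e bitD_le // eqxx; case: (bit l _).
by rewrite {2}e bitD // addbA addbb.
Qed.

Lemma flipK l x : flipn l (flipn l x) = x.
Proof.
rewrite {1}/flipn bit_flip eqxx /flipn; case hb: (bit l x) => /=.
  by rewrite subnK // bit_ge.
by rewrite addnK.
Qed.

Lemma modS2 m d : 0 < d -> m %% (d * 2) = m %% d + d * ((m %/ d) %% 2).
Proof.
move=> d0.
have lt : m %% d + d * ((m %/ d) %% 2) < d * 2.
  have := ltn_pmod m d0; have : (m %/ d) %% 2 <= 1 by rewrite -ltnS ltn_pmod.
  move=> h1 h2. have := leq_mul (leqnn d) h1. lia.
rewrite {1}(divn_eq m d) {1}(divn_eq (m %/ d) 2).
rewrite mulnDl -mulnA [2 * d]mulnC -addnA modnMDl modn_small.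
by rewrite addnC mulnC. by rewrite addnC mulnC.
Qed.

Lemma modS x j : x %% 2^j.+1 = x %% 2^j + bit j x * 2^j.
Proof. by rewrite expnSr modS2 ?expn_gt0 // modn2 mulnC. Qed.

Lemma bit_mod_lt x i j : i < j -> bit i (x %% 2^j) = bit i x.
Proof.
move=> ij; rewrite /bit divn_modl; last by rewrite dvdn_exp2l // ltnW.
have -> : 2^j %/ 2^i = 2^(j-i) by rewrite -{1}(subnK (ltnW ij)) expnD mulnK // expn_gt0.
rewrite odd_mod // oddX /=; by rewrite subn_eq0 leqNgt ij.
Qed.

Lemma bit_mod_ge x i j : j <= i -> bit i (x %% 2^j) = false.
Proof.
move=> ji; rewrite /bit divn_small //.
apply: (leq_trans (ltn_pmod _ _)); by rewrite ?expn_gt0 // leq_exp2l.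
Qed.

Lemma eqmod_bits x y j : (forall i, i < j -> bit i x = bit i y) -> x %% 2^j = y %% 2^j.
Proof.
elim: j => [|j IH] h; first by rewrite expn0 !modn1.
by rewrite !modS IH ?h // => i ij; apply: h; apply: ltnW.
Qed.

Lemma bits_eqmod x y j i : x %% 2^j = y %% 2^j -> i < j -> bit i x = bit i y.
Proof. by move=> e ij; rewrite -(bit_mod_lt x ij) e bit_mod_lt. Qed.

Lemma bits_eq k x y : x < 2^k -> y < 2^k -> (forall i, i < k -> bit i x = bit i y) -> x = y.
Proof. by move=> hx hy h; rewrite -(modn_small hx) -(modn_small hy); apply: eqmod_bits. Qed.

Lemma flip_lt k l x : x < 2^k -> l < k -> flipn l x < 2^k.
Proof.
move=> xk lk; rewrite /flipn; case: ifP => hb.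
  exact: leq_ltn_trans (leq_subr _ _) xk.
have : (x + 2^l) %/ 2^k = 0 by rewrite divD_gt // divn_small.
move/eqP; rewrite -leqn0 -ltnS ltn_divLR ?expn_gt0 // mul1n //.
Qed.

Local Open Scope group_scope.
Unset Implicit Arguments.

Lemma exp2_gt0 k : 0 < 2^k. Proof. by rewrite expn_gt0. Qed.
Definition o0 k : 'I_(2^k) := Ordinal (exp2_gt0 k).
Definition toO k (n : nat) : 'I_(2^k) := insubd (o0 k) n.
Lemma toOK k n : n < 2^k -> val (toO k n) = n.
Proof. by move=> h; rewrite val_insubd h. Qed.

Definition clr l x := if bit l x then flipn l x else x.
Lemma clr_flip l x : clr l (flipn l x) = clr l x.
Proof.
rewrite /clr bit_flip eqxx; case: (bit l x) => //=; by rewrite flipK.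
Qed.
Lemma bit_clr l x i : i != l -> bit i (clr l x) = bit i x.
Proof. by move=> il; rewrite /clr; case: ifP => // _; rewrite bit_flip (negbTE il). Qed.
Lemma clr_mod l x : (clr l x) %% 2^l = x %% 2^l.
Proof. by apply: eqmod_bits => i il; rewrite bit_clr // ltn_eqF. Qed.

Definition gfun k l (p : nat -> bool) (x : 'I_(2^k)) : 'I_(2^k) :=
  if (l < k) && p (clr l x) then toO k (flipn l x) else x.

Lemma gfunK k l p : involutive (gfun k l p).
Proof.
move=> x; rewrite /gfun; case: (ltnP l k) => lk //=; case hp: (p (clr l x)); last by rewrite hp.
rewrite toOK ?flip_lt ?clr_flip ?hp //; apply: val_inj; rewrite toOK ?flipK // flip_lt.
Qed.

Definition gperm k l p : {perm 'I_(2^k)} := perm (can_inj (gfunK k l p)).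
Lemma gpermE k l p x : gperm k l p x = gfun k l p x.
Proof. by rewrite permE. Qed.
Lemma gpermK k l p : gperm k l p * gperm k l p = 1.
Proof. by apply/permP => x; rewrite permM !gpermE gfunK perm1. Qed.
Lemma bit_gperm k l p (x : 'I_(2^k)) i : l < k ->
  bit i (gperm k l p x) = bit i x (+) ((i == l) && p (clr l x)).
Proof.
move=> lk; rewrite gpermE /gfun lk /=; case: (p _); last by rewrite andbF addbF.
by rewrite toOK ?flip_lt // bit_flip andbT addbC.
Qed.
Lemma gperm_mod k l p (x : 'I_(2^k)) j : l < k -> j <= l ->
  (gperm k l p x) %% 2^j = x %% 2^j.
Proof.
move=> lk jl; apply: eqmod_bits => i ij; rewrite bit_gperm //.
by rewrite (ltn_eqF (leq_trans ij jl)) addbF.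
Qed.

Definition treeT k : {set {perm 'I_(2^k)}} :=
  [set s : {perm 'I_(2^k)} | [forall x : 'I_(2^k), forall y : 'I_(2^k), forall j : 'I_k.+1,
     (x %% 2^j == y %% 2^j) == (s x %% 2^j == s y %% 2^j)]].

Lemma treeP k (s : {perm 'I_(2^k)}) : reflect (forall (x y : 'I_(2^k)) j, j <= k ->
   (x %% 2^j == y %% 2^j) = (s x %% 2^j == s y %% 2^j)) (s \in treeT k).
Proof.
apply: (iffP idP).
  rewrite inE => /forallP h x y j jk; move/forallP: (h x) => /(_ y) /forallP.
  by move/(_ (Ordinal (jk : j < k.+1)))/eqP.
move=> h; rewrite inE; apply/forallP => x; apply/forallP => y; apply/forallP => j.
by rewrite h // -ltnS.
Qed.

Lemma tree_group k : group_set (treeT k).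
Proof.
apply/group_setP; split.
  by apply/treeP => x y j _; rewrite !perm1.
move=> s t /treeP hs /treeP ht; apply/treeP => x y j jk.
by rewrite !permM hs // ht.
Qed.
Definition TG k := Group (tree_group k).

Lemma tree_invol k (s : {perm 'I_(2^k)}) : s * s = 1 ->
  (forall (x y : 'I_(2^k)) j, j <= k -> x %% 2^j = y %% 2^j -> s x %% 2^j = s y %% 2^j) ->
  s \in treeT k.
Proof.
move=> ss h; apply/treeP => x y j jk; apply/eqP/eqP; first exact: h.
have e z : s (s z) = z by rewrite -permM ss perm1.
by move/(h _ _ _ jk); rewrite !e.
Qed.

Definition tau k l (c : nat -> bool) := gperm k l (fun x => c (x %% 2^l)).

Lemma bit_tau k l c (x : 'I_(2^k)) i : l < k ->
  bit i (tau k l c x) = bit i x (+) ((i == l) && c (x %% 2^l)).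
Proof. by move=> lk; rewrite bit_gperm // clr_mod. Qed.

Lemma tauK k l c : tau k l c * tau k l c = 1.
Proof. exact: gpermK. Qed.

Lemma tau_tree k l c : tau k l c \in treeT k.
Proof.
apply: tree_invol; first exact: tauK.
case: (ltnP l k) => lk; last first.
  by move=> x y j _; rewrite /tau !gpermE /gfun ltnNge lk.
move=> x y j jk e; apply: eqmod_bits => i ij; rewrite !bit_tau //.
rewrite (bits_eqmod e ij); case: eqP => // il; congr (_ (+) (_ && c _)).
by apply: eqmod_bits => i' i'l; apply: bits_eqmod e _; rewrite (leq_trans i'l) // -il ltnW.
Qed.

Fixpoint Theta k (c : nat -> nat -> bool) m : {perm 'I_(2^k)} :=
  if m is m'.+1 then tau k m' (c m') * Theta k c m' else 1.

Lemma bit_Theta k c m (x : 'I_(2^k)) i : m <= k ->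
  bit i (Theta k c m x) = bit i x (+) ((i < m) && c i (x %% 2^i)).
Proof.
elim: m x => [|m IH] x mk /=; first by rewrite perm1 addbF.
rewrite permM IH ?(ltnW mk) // bit_tau //.
case: (ltngtP i m) => im.
- by rewrite /= addbF /tau gperm_mod // ?ltnS ?(ltnW im).
- have -> : (i < m.+1) = false by rewrite ltnS leqNgt im.
  by rewrite /= !addbF.
- by rewrite im ltnSn /= addbF.
Qed.

Lemma Theta_tree k c m : Theta k c m \in treeT k.
Proof.
elim: m => [|m IH] /=; first exact: (group1 (TG k)).
exact: (@groupM _ (TG k) _ _ (tau_tree k m (c m)) IH).
Qed.

Definition Fam k := {ffun 'I_(2^k - 1) -> bool}.
Definition fam_at k (F : Fam k) (n : nat) : bool := oapp F false (insub n).
Definition cF k (F : Fam k) : nat -> nat -> bool := fun l r => fam_at k F (2^l + r - 1).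
Definition ThetaF k (F : Fam k) := Theta k (cF k F) k.
Definition PhiF k (s : {perm 'I_(2^k)}) : Fam k :=
  [ffun n : 'I_(2^k - 1) => let l := trunc_log 2 n.+1 in let r := n.+1 - 2^l in
     bit l (s (toO k r)) (+) bit l r].

Lemma fam_atE k (F : Fam k) (n : 'I_(2^k - 1)) : fam_at k F n = F n.
Proof. by rewrite /fam_at valK. Qed.

Lemma node_bounds k n : n < 2^k - 1 ->
  let l := trunc_log 2 n.+1 in [/\ 2^l <= n.+1, n.+1 < 2^l.+1, l < k & n.+1 - 2^l < 2^l].
Proof.
move=> nk /=; have [h1 h2] := andP (trunc_log_bounds (isT : 1 < 2) (ltn0Sn n)).
split=> //.
  rewrite -(ltn_exp2l _ _ (isT : 1 < 2)); apply: leq_ltn_trans h1 _.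
  by move: nk; have := exp2_gt0 k; lia.
by move: h2 h1; rewrite expnS; lia.
Qed.

Lemma bool4 (a b c d : bool) : (a == b) = (c == d) -> c = a (+) (d (+) b).
Proof. by case: a; case: b; case: c; case: d. Qed.

Lemma modS_eq x y i : x %% 2^i = y %% 2^i ->
  (x %% 2^i.+1 == y %% 2^i.+1) = (bit i x == bit i y).
Proof.
by move=> e; rewrite !modS e eqn_add2l eqn_pmul2r ?exp2_gt0 //; case: (bit i x); case: (bit i y).
Qed.

Lemma PhiK k (F : Fam k) : PhiF k (ThetaF k F) = F.
Proof.
apply/ffunP => n; rewrite ffunE /=.
have [h1 h2 lk rl] := node_bounds k n (ltn_ord n).
set l := trunc_log 2 n.+1 in h1 h2 lk rl *.
have rk : n.+1 - 2^l < 2^k by apply: (leq_trans rl); rewrite leq_exp2l // ltnW.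
rewrite bit_Theta // toOK // lk /= modn_small // /cF.
have -> : 2^l + (n.+1 - 2^l) - 1 = n by rewrite subnKC // subn1.
by rewrite fam_atE addbC addbA addbb.
Qed.

Lemma L1 a b r : 0 < a -> r < a -> 2*a <= b -> a + r - 1 < b - 1.
Proof. lia. Qed.
Lemma L2 a r : 0 < a -> (a + r - 1).+1 = a + r.
Proof. lia. Qed.

Lemma ThetaK k (s : {perm 'I_(2^k)}) : s \in treeT k -> ThetaF k (PhiF k s) = s.
Proof.
move/treeP=> hs; apply/permP => x; apply: val_inj; apply: (bits_eq (ltn_ord _) (ltn_ord _)) => i ik.
rewrite bit_Theta // ik /= /cF.
set r := x %% 2^i.
have ri : r < 2^i by rewrite ltn_pmod ?exp2_gt0.
have rk : r < 2^k by apply: (leq_trans ri); rewrite leq_exp2l // ltnW.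
have nk : 2^i + r - 1 < 2^k - 1.
  by apply: L1 ri _; [exact: exp2_gt0 | rewrite -expnS leq_exp2l].
have -> : fam_at k (PhiF k s) (2^i + r - 1) = PhiF k s (Ordinal nk) by rewrite -fam_atE.
rewrite ffunE.
have e1 : (2^i + r - 1).+1 = 2^i + r by apply: L2; exact: exp2_gt0.
have tl : trunc_log 2 (2^i + r) = i.
  by apply: trunc_log_eq => //; rewrite leq_addr /= expnS mul2n -addnn ltn_add2l.
change (nat_of_ord (Ordinal nk)) with (2^i + r - 1).
cbv zeta; rewrite e1 tl addKn.
set y := toO k r.
have yv : val y = r by rewrite toOK.
have exy : x %% 2^i = y %% 2^i by rewrite yv /r modn_mod.
have esy : s x %% 2^i = s y %% 2^i.
  by have := hs x y i (ltnW ik); rewrite exy eqxx => /esym/eqP.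
have := hs x y i.+1 ik; rewrite !modS_eq // yv.
by move/bool4 ->.
Qed.

Lemma ThetaF_tree k F : ThetaF k F \in treeT k.
Proof. exact: Theta_tree. Qed.

Lemma treeE k : treeT k = ThetaF k @: [set: Fam k].
Proof.
apply/setP => s; apply/idP/imsetP => [hs | [F _ ->]]; last exact: ThetaF_tree.
by exists (PhiF k s); rewrite ?inE // ThetaK.
Qed.

Lemma card_tree k : #|treeT k| = (2^(2^k - 1))%N.
Proof.
rewrite treeE card_imset; last exact: (can_inj (PhiK k)).
by rewrite cardsT card_ffun card_bool card_ord.
Qed.

Lemma sum_div k : (\sum_(1 <= j < k.+1) 2^k %/ 2^j = 2^k - 1)%N.
Proof.
elim: k => [|k IH]; first by rewrite big_geq.
rewrite big_add1 /=.
have e j : 2^k.+1 %/ 2^j.+1 = 2^k %/ 2^j by rewrite !expnS divnMl.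
rewrite (eq_bigr _ (fun j _ => e j)) big_nat_recl // expn0 divn1.
have -> : \sum_(0 <= i < k) 2^k %/ 2^i.+1 = \sum_(1 <= j < k.+1) 2^k %/ 2^j.
  by rewrite big_add1.
by rewrite IH expnS mul2n -addnn addnBA // exp2_gt0.
Qed.

Lemma logn_fact2 k : logn 2 (2^k)`! = (2^k - 1)%N.
Proof.
rewrite logn_fact // (big_cat_nat _ (n := k.+1)) //=; last by rewrite ltnS ltnW // ltn_expl.
rewrite sum_div big1_seq ?addn0 // => j /andP [_]; rewrite mem_index_iota => /andP [kj _].
by rewrite divn_small // ltn_exp2l.
Qed.

Lemma tree_Sylow k : 2.-Sylow([set: {perm 'I_(2^k)}]) (TG k).
Proof.
rewrite pHallE subsetT /= cardsT card_Sn p_part logn_fact2.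
by rewrite card_tree.
Qed.

Lemma even_tau k l c : l.+1 < k -> odd_perm (tau k l c) = false.
Proof.
move=> lk; have lk' : l < k by apply: ltnW.
have k1k : k.-1 < k by rewrite prednK ?ltnSn // (leq_trans _ lk).
have lk1 : l != k.-1 by rewrite ltn_eqF // -ltnS prednK // (leq_trans _ lk).
have lk1' : k.-1 != l by rewrite eq_sym.
pose a := gperm k l (fun x => c (x %% 2^l) && ~~ bit k.-1 x).
pose b := gperm k l (fun x => c (x %% 2^l) && bit k.-1 x).
pose g := gperm k k.-1 (fun _ => true).
have e1 : tau k l c = a * b.
  apply/permP => x; apply: val_inj; apply: (bits_eq (ltn_ord _) (ltn_ord _)) => i ik.
  rewrite permM /a /b /tau !bit_gperm // !clr_mod !bit_clr // gperm_mod // bit_gperm //.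
  rewrite (negbTE lk1') /= addbF.
  by case: (i == l); case: (c _); case: (bit k.-1 x); case: (bit i x).
have gi : g^-1 = g by apply: (mulgI g); rewrite mulgV gpermK.
have e2 : b = a ^ g.
  apply/permP => x; apply: val_inj; apply: (bits_eq (ltn_ord _) (ltn_ord _)) => i ik.
  rewrite /conjg gi !permM /a /b /g !bit_gperm // !clr_mod !bit_clr // gperm_mod ?bit_gperm //; last first.
    by rewrite -ltnS prednK // (leq_trans _ lk).
  rewrite eqxx /= !andbT.
  by case: (i == l); case: (i == k.-1); case: (c _); case: (bit k.-1 x); case: (bit i x).
by rewrite e1 odd_permM e2 odd_permJ addbb.
Qed.

Lemma Theta_even k c m : m < k -> odd_perm (Theta k c m) = false.
Proof.
elim: m => [|m IH] mk /=; first by rewrite odd_perm1.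
by rewrite odd_permM even_tau // IH // ltnW.
Qed.

Lemma sq_step (gT : finGroupType) (G : {group gT}) s x :
  s \in G -> x \in G -> s * s = 1 -> x ^+ 2 \in G^`(1) -> (s * x) ^+ 2 \in G^`(1).
Proof.
move=> sG xG ss x2.
have si : s^-1 = s by apply: (mulgI s); rewrite mulgV ss.
have -> : (s * x) ^+ 2 = [~ s, x^-1] * x ^+ 2.
  by rewrite /commg /conjg si invgK !expgS expg0 !mulg1 !mulgA mulgKV.
by rewrite groupM //; apply: mem_commg; rewrite ?groupV.
Qed.

Lemma sq_in_der (gT : finGroupType) (P : {group gT}) :
  (forall x, x \in P -> x ^+ 2 \in P^`(1)) ->
  P^`(1) = squares_subgroup P.
Proof.
move=> h; apply/eqP; rewrite eqEsubset; apply/andP; split.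
  rewrite derg1 gen_subG; apply/subsetP => _ /imset2P [x y xP yP ->].
  have -> : [~ x, y] = (x^-1) ^+ 2 * (x * y^-1) ^+ 2 * y ^+ 2.
    by rewrite /commg /conjg !expgS expg0 !mulg1 !mulgA !mulgKV.
  have sq z : z \in P -> z ^+ 2 \in squares_subgroup P by move=> zP; apply: mem_gen; apply/imsetP; exists z.
  by apply: groupM; [apply: groupM|]; apply: sq; rewrite ?groupM ?groupV.
rewrite gen_subG; apply/subsetP => _ /imsetP [x xP ->]; exact: h.
Qed.

Theorem mainTheorem18 (k : nat) (P : {group {perm 'I_(2 ^ k)}})
  (HP : 2.-Sylow('Alt_('I_(2 ^ k))) P) :
  P^`(1) = squares_subgroup P /\ 'Phi(P) = P^`(1).
Proof.
have pP : 2.-group P := pHall_pgroup HP.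
have key : forall x, x \in P -> x ^+ 2 \in P^`(1).
  have [g _ sPTg] := Sylow_subJ (tree_Sylow k) (subsetT P) pP.
  pose Q := (TG k :^ g :&: 'Alt_('I_(2^k)))%G.
  have pQ : 2.-group Q.
    by apply: pgroupS (subsetIl _ _) _; rewrite pgroupJ (pHall_pgroup (tree_Sylow k)).
  have sPQ : P \subset Q by rewrite subsetI sPTg (pHall_sub HP).
  have eQ : Q :=: P := sub_pHall HP pQ sPQ (subsetIr _ _).
  have inP y : y \in treeT k -> odd_perm y = false -> y ^ g \in P.
    by move=> yT yo; rewrite -eQ inE memJ_conjg yT /= Alt_even odd_permJ yo.
  have IH m : m <= k -> forall c, Theta k c m ^ g \in P -> (Theta k c m ^ g) ^+ 2 \in P^`(1).
    elim: m => [|m IH] mk c /=.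
      by rewrite conj1g expg1n group1.
    move=> hP.
    have eT : odd_perm (Theta k c m) = false by apply: Theta_even.
    have et : odd_perm (tau k m (c m)) = false.
      have := subsetP (pHall_sub HP) _ hP.
      by rewrite Alt_even odd_permJ odd_permM eT addbF => /negbTE.
    rewrite conjMg; apply: sq_step.
    - exact: inP (tau_tree _ _ _) et.
    - exact: inP (Theta_tree _ _ _) eT.
    - by rewrite -conjMg tauK conj1g.
    - apply: IH; [exact: ltnW | exact: inP (Theta_tree _ _ _) eT].
  move=> x xP.
  have xT : x ^ g^-1 \in treeT k by move: (subsetP sPTg x xP); rewrite mem_conjg.
  have ex : x = (ThetaF k (PhiF k (x ^ g^-1))) ^ g by rewrite ThetaK // conjgKV.
  by rewrite ex; apply: IH => //; rewrite -ex.
split; first exact: sq_in_der.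
rewrite (Phi_joing pP) (MhoE 1 pP) expn1.
apply/joing_idPl; rewrite gen_subG; apply/subsetP => _ /imsetP [x xP ->]; exact: key.
Qed.
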